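(* For every positive integer $n$ and every $u\in S_n$, \[ t^{\mathrm{des}(u)}q^{\mathrm{maj}(u)}\prod_{i=1}^n (1+tq^i) = \sum_{w \in B'(u)} t^{\mathrm{fdes}(w)}q^{\mathrm{fmaj}(w)}.\]
   Context: $S_n$ is the set of permutations of $[n]=\{1,\dots,n\}$, written as words $u=u_1\cdots u_n$. $B_n$ is the set of signed permutations: words $w=w_1\cdots w_n$ on the alphabet $\{\bar 1,1,\dots,\bar n,n\}$ (where $\bar i=-i$) such that $|w|:=|w_1|\cdots|w_n|$ is a permutation in $S_n$. The alphabet is totally ordered by $\bar 1<\bar 2<\cdots<\bar n<1<2<\cdots<n$. For a word $w$ over a totally ordered alphabet, $\mathrm{Des}(w)=\{i: w_i>w_{i+1}\}$, $\mathrm{des}(w)=|\mathrm{Des}(w)|$, and $\mathrm{maj}(w)=\sum_{i\in\mathrm{Des}(w)} i$. For $w\in B_n$: $\mathrm{fdes}(w)=2\,\mathrm{des}(w)+1$ if $w_1<0$ and $\mathrm{fdes}(w)=2\,\mathrm{des}(w)$ if $w_1>0$; $\mathrm{fmaj}(w)=2\,\mathrm{maj}(w)+|\{i:w_i<0\}|$. For $u\in S_n$, $B'(u)=\{w\in B_n: |w|=u\}$. *)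

(* Defs.v *)
From HB Require Import structures.
From mathcomp Require Import all_boot all_order all_algebra.
Set Implicit Arguments. Unset Strict Implicit. Unset Printing Implicit Defensive.
Import Order.TTheory GRing.Theory Num.Theory.

(* Descent set of a word w = w_1 ... w_m over an alphabet totally ordered by
   the strict order [lt]: positions i (1-indexed, 1 <= i < m) with
   w_i > w_{i+1}, i.e. lt w_{i+1} w_i. *)
Definition Des (T : Type) (x0 : T) (lt : T -> T -> bool) (w : seq T) : seq nat :=
  [seq i <- iota 1 (size w).-1 | lt (nth x0 w i) (nth x0 w i.-1)].
Definition des (T : Type) (x0 : T) (lt : T -> T -> bool) (w : seq T) : nat :=
  size (Des x0 lt w).
Definition maj (T : Type) (x0 : T) (lt : T -> T -> bool) (w : seq T) : nat :=
  sumn (Des x0 lt w).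

Definition desS (u : seq nat) : nat := des 0%N ltn u.
Definition majS (u : seq nat) : nat := maj 0%N ltn u.

(* Signed letters are nonzero integers, bar i = -i.  The total order
   bar 1 < bar 2 < ... < bar n < 1 < 2 < ... < n. *)
Definition ltB (a b : int) : bool :=
  if (a < 0)%R then (if (b < 0)%R then (`|a| < `|b|)%N else true)
  else (if (b < 0)%R then false else (`|a| < `|b|)%N).

Definition desB (w : seq int) : nat := des 0%R ltB w.
Definition majB (w : seq int) : nat := maj 0%R ltB w.
Definition negB (w : seq int) : nat := count (fun a : int => (a < 0)%R) w.

Definition fdes (w : seq int) : nat :=
  (2 * desB w + (head 0%R w < 0)%R)%N.
Definition fmaj (w : seq int) : nat := (2 * majB w + negB w)%N.

(* B'(u) = { w in B_n : |w| = u }.  A word w with |w| = u is determined by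
   the set of positions carrying a bar; [signword n u s] is the word whose
   i-th letter is bar u_i if s i and u_i otherwise.  s ranges over all
   sign choices, giving each element of B'(u) exactly once. *)
Definition signword (n : nat) (u : seq nat) (s : {ffun 'I_n -> bool}) : seq int :=
  [seq (if s i then - ((nth 0%N u i)%:Z) else (nth 0%N u i)%:Z)%R | i <- enum 'I_n].

(* Main.v *)
Require Import Defs.
From Stdlib Require Import Lia.
From HB Require Import structures.
From mathcomp Require Import all_boot all_order all_algebra.
Import Order.TTheory GRing.Theory Num.Theory.
Set Implicit Arguments. Unset Strict Implicit. Unset Printing Implicit Defensive.

Lemma Des_rcons T (x0 : T) lt w y : (0 < size w)%N ->
  Des x0 lt (rcons w y) = Des x0 lt w ++ (if lt y (last x0 w) then [:: size w] else [::]).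
Proof.
move=> w0; rewrite /Des size_rcons /=.
have [k hk] : exists k, size w = k.+1 by exists (size w).-1; rewrite prednK.
rewrite hk -[k.+1]addn1 iotaD filter_cat /=.
congr (_ ++ _).
  rewrite addn1 /=.
  apply: eq_in_filter => i; rewrite mem_iota => /andP [i1 i2].
  rewrite !nth_rcons hk.
  have h1 : (i < k.+1)%N by rewrite add1n in i2.
  by rewrite h1 (leq_ltn_trans (leq_pred i) h1).
rewrite add0n add1n addn1 !nth_rcons hk ltnn eqxx ltnSn -nth_last hk.
by [].
Qed.

Definition sg (b : bool) (x : nat) : int := if b then (- (Posz x))%R else Posz x.
Arguments sg : simpl never.

Definition gext n (b : bool) (f : {ffun 'I_n -> bool}) : {ffun 'I_n.+1 -> bool} :=
  [ffun i : 'I_n.+1 => if @insub _ (fun k => k < n) _ (val i) is Some j then f j else b].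

Definition gproj n (f : {ffun 'I_n.+1 -> bool}) : bool * {ffun 'I_n -> bool} :=
  (f ord_max, [ffun j : 'I_n => f (widen_ord (leqnSn n) j)]).

Lemma gextK n : cancel (fun p : bool * {ffun 'I_n -> bool} => gext p.1 p.2) (@gproj n).
Proof.
move=> [b f]; rewrite /gproj /gext /=; congr pair.
  by rewrite ffunE insubF //= ltnn.
apply/ffunP => j; rewrite !ffunE /=.
by rewrite (insubT (fun k => k < n) (ltn_ord j)) /=; congr (f _); apply: val_inj.
Qed.

Lemma gprojK n : cancel (@gproj n) (fun p : bool * {ffun 'I_n -> bool} => gext p.1 p.2).
Proof.
move=> f; apply/ffunP => i; rewrite /gproj /gext /= !ffunE.
case: insubP => [j _ vj|].
  by rewrite ffunE; congr (f _); apply: val_inj.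
move=> hi; congr (f _); apply: val_inj => /=.
by apply/eqP; rewrite eqn_leq leqNgt hi -ltnS ltn_ord.
Qed.

Lemma sum_split (R : nmodType) n (F : {ffun 'I_n.+1 -> bool} -> R) :
  (\sum_(f : {ffun 'I_n.+1 -> bool}) F f =
   \sum_(b : bool) \sum_(f : {ffun 'I_n -> bool}) F (gext b f))%R.
Proof.
rewrite pair_big /=.
rewrite (reindex (fun p : bool * {ffun 'I_n -> bool} => gext p.1 p.2)) //=.
by exists (@gproj n) => ? _; [apply: gextK | apply: gprojK].
Qed.

Lemma sw_rcons n u x b (f : {ffun 'I_n -> bool}) : size u = n ->
  signword (rcons u x) (gext b f) = rcons (signword u f) (sg b x).
Proof.
move=> su; rewrite /signword enum_ordSr map_rcons -map_comp.
congr rcons.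
  apply: eq_map => i /=; rewrite ffunE /= nth_rcons su (ltn_ord i).
  by rewrite (insubT (fun k => k < n) (ltn_ord i)) /=; congr (if f _ then _ else _); apply: val_inj.
rewrite ffunE /= insubF /= ?ltnn // nth_rcons su ltnn eqxx.
by [].
Qed.

Lemma sw_last n u (f : {ffun 'I_n.+1 -> bool}) :
  last 0%R (signword u f) = sg (f ord_max) (nth 0%N u n).
Proof. by rewrite /signword enum_ordSr map_rcons last_rcons. Qed.

Lemma sw_size n u (f : {ffun 'I_n -> bool}) : size (signword u f) = n.
Proof. by rewrite /signword size_map size_enum_ord. Qed.

Lemma gext_max n b (f : {ffun 'I_n -> bool}) : gext b f ord_max = b.
Proof. by rewrite /gext ffunE insubF //= ltnn. Qed.

Lemma des_rcons T (x0 : T) lt w y : (0 < size w)%N ->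
  des x0 lt (rcons w y) = (des x0 lt w + lt y (last x0 w))%N.
Proof. by move=> w0; rewrite /des Des_rcons // size_cat; case: (lt _ _); rewrite ?addn0 ?addn1. Qed.

Lemma maj_rcons T (x0 : T) lt w y : (0 < size w)%N ->
  maj x0 lt (rcons w y) = (maj x0 lt w + lt y (last x0 w) * size w)%N.
Proof.
move=> w0; rewrite /maj Des_rcons // sumn_cat.
by case: (lt _ _) => /=; rewrite ?mul1n ?mul0n ?addn0.
Qed.

Lemma ltB_sg b c x z : (0 < x)%N -> (0 < z)%N ->
  ltB (sg b x) (sg c z) = if b then (if c then x < z else true) else (if c then false else x < z)%N.
Proof.
move=> x0 z0; rewrite /ltB /sg.
have hx : (- Posz x < 0)%R by rewrite oppr_lt0 ltz_nat.
have hz : (- Posz z < 0)%R by rewrite oppr_lt0 ltz_nat.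
by case: b; case: c; rewrite ?hx ?hz ?ltNge ?le0z_nat /= ?abszN ?absz_nat.
Qed.

Lemma sg_neg b x : (0 < x)%N -> (sg b x < 0)%R = b.
Proof. by move=> x0; case: b; rewrite /sg ?oppr_lt0 ?ltz_nat // ltNge le0z_nat. Qed.

Section S. Variable R : comNzRingType.
Local Open Scope ring_scope.
Lemma alg1 (a p X q : R) (d : bool) :
  a * p * X * X ^+ (2 * d) * q ^+ 1 + a * p * X ^+ (2 * 1) * q ^+ 1 = a * X ^+ d * (p * (1 + X)) * (X * q).
Proof.
rewrite !mulrDr !mulrDl !mulr1 !expr1 muln1 expr2.
case: d; rewrite /= ?muln1 ?muln0 ?expr0 ?expr1 ?mulr1 ?expr2.
  rewrite addrC; congr (_ + _).
    by rewrite !mulrA [RHS](ACl (1*3*2*4*5)).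
  by rewrite !mulrA [RHS](ACl (1*3*2*4*5*6)).
congr (_ + _).
  by rewrite !mulrA.
by rewrite !mulrA.
Qed.
Lemma alg2 (a p X q : R) (d : bool) :
  a * p * X * X ^+ (2 * 0) * q ^+ 0 + a * p * X ^+ (2 * d) * q ^+ 0 = a * X ^+ d * (p * (1 + X)) * 1.
Proof.
rewrite !mulrDr !mulrDl !mulr1.
case: d; rewrite /= ?muln1 ?muln0 ?expr0 ?expr1 ?mulr1 ?expr2 ?mulr1.
  congr (_ + _); first by rewrite [RHS](ACl (1*3*2)).
  by rewrite !mulrA [RHS](ACl (1*3*2*4)).
by rewrite addrC ?mulrA.
Qed.
End S.

Section Alg.
Variables (R : comNzRingType) (t q : R).
Local Open Scope ring_scope.

Definition W (w : seq int) : R := t ^+ fdes w * q ^+ fmaj w.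
Definition A (u : seq nat) : R := t ^+ desS u * q ^+ majS u.
Definition P (n : nat) : R := \prod_(1 <= i < n.+1) (1 + t * q ^+ i).

Lemma W_rcons w y : (0 < size w)%N ->
  W (rcons w y) = W w * (t ^+ (2 * ltB y (last 0 w)) * q ^+ (2 * (ltB y (last 0 w) * size w))) * q ^+ (y < 0)%R.
Proof.
move=> w0; rewrite /W /fdes /fmaj /desB /majB des_rcons // maj_rcons //.
have -> : head 0 (rcons w y) = head 0 w by case: w w0.
have -> : negB (rcons w y) = (negB w + (y < 0)%R)%N by rewrite /negB -cats1 count_cat /= addn0.
set D := des _ _ w; set M := maj _ _ w; set E := nat_of_bool (ltB _ _); set H := nat_of_bool (head _ _ < 0)%R.
set N := negB w; set Y := nat_of_bool (y < 0)%R.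
have -> : (2 * (D + E) + H = (2 * D + H) + 2 * E)%N by rewrite mulnDr addnAC.
have -> : (2 * (M + E * size w) + (N + Y) = (2 * M + N) + 2 * (E * size w) + Y)%N.
  rewrite mulnDr !addnA !addn0 -!addnA !add0n; do 2 congr (_ + _)%N.
  by rewrite [in RHS]addnCA; congr (_ + _)%N; rewrite [in RHS]addnCA.
rewrite (exprD t (2*D+H)%N (2*E)%N) (exprD q (2*M+N+2*(E*size w))%N Y) (exprD q (2*M+N)%N (2*(E*size w))%N).
set a1 := t ^+ (2*D+H)%N; set a2 := t ^+ (2*E)%N; set b1 := q ^+ (2*M+N)%N; set b2 := q ^+ (2*(E*size w))%N.
by rewrite !mulrA (mulrAC a1 a2 b1).
Qed.

Lemma split_last n (F : {ffun 'I_n.+1 -> bool} -> R) :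
  \sum_(f : {ffun 'I_n.+1 -> bool}) F f = \sum_(f : {ffun 'I_n.+1 -> bool} | f ord_max == true) F f + \sum_(f : {ffun 'I_n.+1 -> bool} | f ord_max == false) F f.
Proof.
rewrite (bigID (fun f : {ffun _ -> _} => f ord_max == true)) /=; congr (_ + _).
by apply: eq_bigl => f; case: (f ord_max).
Qed.

Lemma key n u : size u = n.+1 -> 0%N \notin u -> forall b,
  \sum_(f : {ffun 'I_n.+1 -> bool} | f ord_max == b) W (signword u f)
  = A u * P n * (if b then t * q ^+ n.+1 else 1).
Proof.
elim: n u => [|n IH] u su u0 b.
  case: u su u0 => [|x [|]] //= _ u0.
  have x0 : (0 < x)%N by rewrite lt0n; move: u0; rewrite in_cons negb_or eq_sym => /andP[].
  have e c (f0 : {ffun 'I_0 -> bool}) : signword [:: x] (gext c f0) = [:: sg c x].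
    by rewrite -[[:: x]]/(rcons [::] x) sw_rcons // (size0nil (sw_size [::] f0)).
  rewrite big_mkcond sum_split big_bool /=.
  under eq_bigr do rewrite gext_max e.
  under [X in _ + X]eq_bigr do rewrite gext_max e.
  rewrite !sumr_const card_ffun card_bool card_ord /= !mulr1n /P big_geq // /A.
  have hx : (- Posz x < 0)%R by rewrite oppr_lt0 ltz_nat.
  have hx' : (Posz x < 0)%R = false by rewrite ltNge le0z_nat.
  by case: b; rewrite /W /fdes /fmaj /negB /= ?hx ?hx' /= ?add0r ?addr0 ?mulr1 ?mul1r.
case/lastP: u su u0 => [//|u x]; rewrite size_rcons => -[su] u0.
have x0 : (0 < x)%N by rewrite lt0n; move: u0; rewrite mem_rcons in_cons negb_or eq_sym => /andP[].
have u0' : 0%N \notin u by move: u0; rewrite mem_rcons in_cons negb_or => /andP[].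
set z := nth 0%N u n.
have z0 : (0 < z)%N.
  rewrite lt0n; have := u0'; apply: contraNneq => <-; by rewrite mem_nth ?su.
have lu : last 0%N u = z by rewrite -nth_last su.
have ws (f : {ffun 'I_n.+1 -> bool}) : (0 < size (signword u f))%N by rewrite sw_size.
have key1 c : \sum_(f : {ffun 'I_n.+1 -> bool}) W (rcons (signword u f) (sg c x))
   = A u * P n * (t * q ^+ n.+1) * ((t ^+ (2 * ltB (sg c x) (sg true z)) * q ^+ (2 * (ltB (sg c x) (sg true z) * n.+1)))) * q ^+ c
   + A u * P n * ((t ^+ (2 * ltB (sg c x) (sg false z)) * q ^+ (2 * (ltB (sg c x) (sg false z) * n.+1)))) * q ^+ c.
  under eq_bigr do rewrite W_rcons // sw_last sw_size sg_neg //.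
  rewrite split_last; congr (_ + _).
    under eq_bigr => f /eqP -> do [].
    by rewrite -!big_distrl /= IH.
  under eq_bigr => f /eqP -> do [].
  by rewrite -!big_distrl /= IH // mulr1.
rewrite big_mkcond sum_split big_bool /=.
under eq_bigr do rewrite gext_max sw_rcons //.
under [X in _ + X]eq_bigr do rewrite gext_max sw_rcons //.
have -> : A (rcons u x) = A u * (t * q ^+ n.+1) ^+ (x < z)%N.
  rewrite /A /desS /majS des_rcons ?su // maj_rcons ?su // lu exprMn -(exprM q n.+1) (mulnC n.+1) !exprD mulrACA.
  by [].
rewrite /P big_nat_recr //= -/(P n).
have tq (e m : nat) : t ^+ (2 * e) * q ^+ (2 * (e * m)) = (t * q ^+ m) ^+ (2 * e).
  by rewrite exprMn -exprM (mulnC m) mulnA.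
case: b; rewrite /= big1_eq ?addr0 ?add0r key1 !ltB_sg //= !tq.
  by rewrite (exprSr q n.+1) [t * (_ * q)]mulrA; apply: alg1.
by apply: alg2.
Qed.
End Alg.

Local Open Scope ring_scope.

Theorem theorem7 (n : nat) (u : seq nat) (R : comNzRingType) (t q : R) :
  (0 < n)%N -> perm_eq u (iota 1 n) ->
  t ^+ desS u * q ^+ majS u * \prod_(1 <= i < n.+1) (1 + t * q ^+ i)
  = \sum_(s : {ffun 'I_n -> bool}) t ^+ fdes (signword u s) * q ^+ fmaj (signword u s).
Proof.
case: n => [//|m] _ pu.
have su : size u = m.+1 by rewrite (perm_size pu) size_iota.
have u0 : 0%N \notin u by rewrite (perm_mem pu) mem_iota.
change (A t q u * P t q m.+1 = \sum_(s : {ffun 'I_m.+1 -> bool}) W t q (signword u s)).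
rewrite split_last !key // mulr1 /P big_nat_recr //= -/(P t q m).
by rewrite mulrDr mulr1 mulrDr addrC !mulrA.
Qed.
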